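(* Let $T$ be a lifted graph, $F\colon T\to T$ a continuous sun-like map of degree 1, ${\cal P}$ a basic partition of $F$ and ${\cal G}$ its covering graph. (i) Every connected component of ${\cal G}$ contains a vertex of the basis, and the number of connected components of ${\cal G}$ is finite and at most $\#{\cal P}$. (ii) Let ${\cal I}$ be the set of infinite paths $(\alpha_n)_{n\ge0}$ in ${\cal G}$ with $H(\alpha_0)=0$ and $H(\alpha_n)>0$ for all $n\ge1$. If $(\alpha_n)_{n\ge0}\in{\cal I}$ then $H(\alpha_n)=n$ for all $n\ge0$; moreover ${\cal I}$ is finite and $\#{\cal I}\le\#{\cal P}$. (iii) If $(\alpha_n)_{n\ge0}$ is an infinite path in ${\cal G}$, then either there exists a connected component $C$ of ${\cal G}$ such that $\alpha_n\in C$ for all sufficiently large $n$, or there exist $(\beta_n)_{n\ge0}\in{\cal I}$ and $N,M\ge0$ such that $\alpha_{N+n}=\beta_{M+n}$ for all $n\ge0$.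
   Context: A lifted graph is a connected topological space $T$ with a homeomorphism $h\colon\mathbb R\to h(\mathbb R)\subset T$ and a homeomorphism $\tau\colon T\to T$ such that $\tau(h(x))=h(x+1)$, the closure of each connected component of $T\setminus h(\mathbb R)$ is a topological finite graph meeting $h(\mathbb R)$ in exactly one point, and only finitely many such components have closure meeting $h([0,1])$. Identify $h(\mathbb R)$ with $\mathbb R$, write $x+m:=\tau^m(x)$; $r_{\mathbb R}\colon T\to\mathbb R$ is the identity on $\mathbb R$ and maps a component $C'$ of $T\setminus\mathbb R$ to the point $\overline{C'}\cap\mathbb R$. $F$ has degree 1 if $F(x+1)=F(x)+1$. Let $T_{\mathbb R}:=\overline{\bigcup_{n\ge0}F^n(\mathbb R)}$, $X:=\overline{T\setminus T_{\mathbb R}}\cap r_{\mathbb R}^{-1}([0,1))$. $F$ is sun-like if $(T\setminus T_{\mathbb R})\cap r_{\mathbb R}^{-1}([0,1))$ consists of finitely many intervals with pairwise disjoint closures $X^i$, $i\in\Lambda$ (branches), each a compact interval meeting $T_{\mathbb R}$ in one endpoint $\min X^i$ (fixing the order of $X^i$). A basic partition is a finite family ${\cal P}=\{X^i_j\}$ of pairwise disjoint nonempty compact intervals $X^i_1<\dots<X^i_{N_i}$ in $X^i$, with $\ell(X^i_j)\in\Lambda$, $p(X^i_j)\in\mathbb Z$, such that $F(X^i_j)\subset(X^{\ell(X^i_j)}+p(X^i_j))\cup\mathrm{Int}(T_{\mathbb R})$, $F(\min X^i_j)=\min X^{\ell(X^i_j)}+p(X^i_j)$, and $F(X\setminus\bigcup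 X^i_j)\cap(X+\mathbb Z)=\emptyset$. For $A_0,\dots,A_n\in{\cal P}$, $\langle A_0\dots A_n\rangle:=F^n(\{x\in T: F^i(x)\in A_i+\mathbb Z,\ 0\le i\le n\})\cap X$. $A_0\dots A_n\sim B_0\dots B_m$ iff for some $k\le\min(n,m)$, $A_{n-i}=B_{m-i}$ ($0\le i\le k$) and $\langle A_0\dots A_{n-k}\rangle=A_{n-k}=B_{m-k}=\langle B_0\dots B_{m-k}\rangle$. The covering graph ${\cal G}$: vertices are classes $A_0\dots A_n/\!\sim$ with $\langle A_0\dots A_n\rangle\ne\emptyset$; arrow $\alpha\to\beta$ iff $\alpha=A_0\dots A_n/\!\sim$, $\beta=A_0\dots A_nA_{n+1}/\!\sim$ for some $A_i\in{\cal P}$. The significant part of $A_0\dots A_n$ is $A_i\dots A_n$ with $i$ the largest index such that $A_0\dots A_n\sim A_i\dots A_n$ (it depends only on the class); the height $H(\alpha)$ of a vertex $\alpha$ is $n-i$, i.e. the length minus one of its significant part. The basis is the set of vertices of height $0$, i.e. $\{A/\!\sim: A\in{\cal P}\}$, identified with ${\cal P}$. An infinite path is a sequence $(\alpha_n)$ of vertices with $\alpha_n\to\alpha_{n+1}$ for all $n$. A subgraph is strongly connected if any two of its vertices $u,v$ are joined by an oriented path of positive length from $u$ to $v$ within it; connected components are the maximal strongly connected subgraphs. *)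

(* Defs.v *)
From HB Require Import structures.
From mathcomp Require Import all_boot all_order all_algebra.
From mathcomp Require Import all_classical all_reals all_analysis.
From mathcomp Require Import Rstruct Rstruct_topology.

Set Implicit Arguments.
Unset Strict Implicit.
Unset Printing Implicit Defensive.

Import Order.TTheory GRing.Theory Num.Theory.
Local Open Scope classical_set_scope.
Local Open Scope ring_scope.

Notation RR := Rdefinitions.R.

Section LiftedGraph.
Variable T : topologicalType.

(* f restricted to A is a homeomorphism onto its image (A, f A with the
   subspace topologies). *)
Definition embedding_on (A : set RR) (f : RR -> T) : Prop :=
  [/\ {within A, continuous f},
      (forall x y, A x -> A y -> f x = f y -> x = y)
    & forall U : set RR, open U ->
        exists V : set T, open V /\ f @` (U `&` A) = V `&` f @` A].

Definition unit_seg : set RR := [set t | 0 <= t <= 1].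

Definition arc (g : RR -> T) : Prop := embedding_on unit_seg g.

Definition finite_graph (G : set T) : Prop :=
  exists (m : nat) (g : 'I_m -> RR -> T),
    [/\ forall i, arc (g i),
        G = \bigcup_(i in [set: 'I_m]) (g i @` unit_seg)
      & forall i j, i != j ->
          (g i @` unit_seg) `&` (g j @` unit_seg) `<=`
          ([set g i 0; g i 1] `&` [set g j 0; g j 1])].

Definition homeo (tau tau' : T -> T) : Prop :=
  [/\ cancel tau tau', cancel tau' tau, continuous tau & continuous tau'].

Variables (h : RR -> T) (tau tau' : T -> T).

Definition cc (x : T) : set T := connected_component (~` range h) x.

Definition lifted_graph : Prop :=
  [/\ connected [set: T] /\ embedding_on setT h,
      homeo tau tau',
      (forall x, tau (h x) = h (x + 1)),
      (forall x, ~ range h x ->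
          finite_graph (closure (cc x)) /\
          exists t0, closure (cc x) `&` range h = [set h t0])
    & exists s : seq T, forall x, ~ range h x ->
        (exists t, 0 <= t <= 1 /\ closure (cc x) (h t)) ->
        exists y, List.In y s /\ cc x = cc y ].

(* x + m := tau^m(x), m an integer *)
Definition shift (m : int) (x : T) : T :=
  match m with
  | Posz p => iter p tau x
  | Negz p => iter p.+1 tau' x
  end.

Definition plusZ (A : set T) : set T :=
  [set z | exists (m : int) (y : T), A y /\ z = shift m y].

Definition rRpre (J : set RR) : set T :=
  [set x | (exists t, J t /\ x = h t) \/
           (~ range h x /\ exists t, J t /\ closure (cc x) (h t))].

Definition unit_co : set RR := [set t | 0 <= t < 1].

Variable F : T -> T.

Definition degree_one : Prop := forall x, F (tau x) = tau (F x).

Definition TR : set T := closure (\bigcup_(p in [set: nat]) (iter p F @` range h)).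

Definition Xset : set T := closure (~` TR) `&` rRpre unit_co.

Variables (n : nat) (gam : 'I_n -> RR -> T).

(* branch X^i, parametrized by gam i, with min X^i = gam i 0 *)
Definition Xb (i : 'I_n) : set T := gam i @` unit_seg.

Definition sun_like : Prop :=
  [/\ forall i, arc (gam i),
      ~` TR `&` rRpre unit_co =
         \bigcup_(i in [set: 'I_n]) (gam i @` [set t | 0 < t <= 1]),
      (forall i, closure (gam i @` [set t | 0 < t <= 1]) = Xb i),
      (forall i j, i != j -> Xb i `&` Xb j = set0)
    & forall i, Xb i `&` TR = [set gam i 0] ].

Variables (k : nat) (br : 'I_k -> 'I_n) (lo hi : 'I_k -> RR).
Variables (ell : 'I_k -> 'I_n) (per : 'I_k -> int).

Definition piece (j : 'I_k) : set T :=
  gam (br j) @` [set t | lo j <= t <= hi j].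

Definition basic_partition : Prop :=
  [/\ forall j, 0 <= lo j /\ lo j <= hi j /\ hi j <= 1,
      (forall j j', j != j' -> piece j `&` piece j' = set0),
      (forall j, F @` piece j `<=` (shift (per j) @` Xb (ell j)) `|` interior TR),
      (forall j, F (gam (br j) (lo j)) = shift (per j) (gam (ell j) 0))
    & forall x, Xset x -> (forall j, ~ piece j x) -> ~ plusZ Xset (F x) ].

Fixpoint follows (w : seq 'I_k) (x : T) : Prop :=
  match w with
  | [::] => True
  | a :: w' => plusZ (piece a) x /\ follows w' (F x)
  end.

Definition brk (w : seq 'I_k) : set T :=
  (iter (size w).-1 F @` [set x | follows w x]) `&` Xset.

(* A_0..A_n ~ B_0..B_m, written with the common suffix A_{n-k}..A_n = a :: s *)
Definition pequiv (w1 w2 : seq 'I_k) : Prop :=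
  exists (u1 u2 : seq 'I_k) (a : 'I_k) (s : seq 'I_k),
    [/\ w1 = u1 ++ a :: s, w2 = u2 ++ a :: s,
        brk (rcons u1 a) = piece a & brk (rcons u2 a) = piece a].

Definition vtx := set (seq 'I_k).

Definition cls (w : seq 'I_k) : vtx := [set w' | pequiv w w'].

Definition is_vertex (al : vtx) : Prop :=
  exists w, [/\ w <> [::], brk w !=set0 & al = cls w].

Definition arrow (al be : vtx) : Prop :=
  [/\ is_vertex al, is_vertex be &
      exists w a, al = cls w /\ be = cls (rcons w a)].

(* the significant part of w is drop i w, of length h.+1 *)
Definition sig_height (w : seq 'I_k) (hh : nat) : Prop :=
  exists i : nat, [/\ (i + hh).+1 = size w, pequiv w (drop i w) &
     forall j, (i < j < size w)%N -> ~ pequiv w (drop j w)].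

(* height H(al) (well defined by the paper: independent of the representative) *)
Definition H (al : vtx) : nat :=
  xget 0%N [set hh | exists w, al = cls w /\ sig_height w hh].

Definition path_in (C : set vtx) (u v : vtx) : Prop :=
  exists (L : nat) (f : nat -> vtx),
    [/\ (0 < L)%N, f 0%N = u, f L = v,
        (forall i, (i < L)%N -> arrow (f i) (f i.+1))
      & forall i, (i <= L)%N -> C (f i)].

Definition strongly_connected (C : set vtx) : Prop :=
  C `<=` is_vertex /\ forall u v, C u -> C v -> path_in C u v.

Definition component (C : set vtx) : Prop :=
  [/\ C !=set0, strongly_connected C &
      forall D, C `<=` D -> strongly_connected D -> D = C].

Definition infinite_path (al : nat -> vtx) : Prop :=
  forall p, arrow (al p) (al p.+1).

Definition Ipath (be : nat -> vtx) : Prop :=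
  [/\ infinite_path be, H (be 0%N) = 0%N & forall p, (0 < p)%N -> (0 < H (be p))%N].

End LiftedGraph.

(* Main.v *)
Require Import Defs.
From HB Require Import structures.
From mathcomp Require Import all_boot all_order all_algebra.
From mathcomp Require Import all_classical all_reals all_analysis.
From mathcomp Require Import Rstruct Rstruct_topology.
From mathcomp Require Import zify ring lra.
Unset Implicit Arguments. Unset Printing Implicit Defensive.
Import Order.TTheory GRing.Theory Num.Theory.
Local Open Scope classical_set_scope.
Local Open Scope ring_scope.

Section Shifts.
Variables (T : topologicalType) (tau tau' : T -> T).
Hypotheses (tK : cancel tau tau') (tK' : cancel tau' tau).
Local Notation sh := (Defs.shift tau tau').

Lemma sh0 x : sh 0 x = x. Proof. by []. Qed.

Lemma sh_tau m x : tau (sh m x) = sh (m + 1) x.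
Proof.
case: m => [p|p].
  have -> : (Posz p + 1 = Posz p.+1)%R by lia.
  by rewrite /= ?iterS.
case: p => [|q]; first by rewrite /= tK'.
have -> : (Negz q.+1 + 1 = Negz q)%R by rewrite !NegzE; lia.
by rewrite /= ?iterS tK'.
Qed.

Lemma sh_tau' m x : tau' (sh m x) = sh (m - 1) x.
Proof.
case: m => [p|p].
  case: p => [|q]; first by have -> : (Posz 0 - 1 = Negz 0)%R by [].
  have -> : (Posz q.+1 - 1 = Posz q)%R by lia.
  by rewrite /= ?iterS tK.
have -> : (Negz p - 1 = Negz p.+1)%R by rewrite !NegzE; lia.
by rewrite /= ?iterS.
Qed.

Lemma sh_add m m' x : sh m (sh m' x) = sh (m + m') x.
Proof.
case: m => [p|p] /=.
  elim: p => [|p IH]; first by rewrite add0r.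
  by rewrite iterS IH sh_tau; congr sh; lia.
elim: p => [|p IH]; first by rewrite /= sh_tau'; congr sh; rewrite NegzE; lia.
by rewrite iterS IH sh_tau'; congr sh; rewrite !NegzE; lia.
Qed.

Lemma shK m x : sh (- m) (sh m x) = x.
Proof. by rewrite sh_add addNr. Qed.
Lemma shKV m x : sh m (sh (- m) x) = x.
Proof. by rewrite sh_add addrN. Qed.

Lemma sh_inj m x y : sh m x = sh m y -> x = y.
Proof. by move=> e; rewrite -(shK m x) e shK. Qed.

Lemma sh_comm (G : T -> T) : (forall x, G (tau x) = tau (G x)) ->
  forall m x, G (sh m x) = sh m (G x).
Proof.
move=> GC.
have GC' x : G (tau' x) = tau' (G x).
  by rewrite -{2}(tK' x) GC tK.
case=> [p|p] x /=.
  by elim: p => [|p IH] //=; rewrite GC IH.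
by elim: p => [|p IH] /=; rewrite GC' // IH.
Qed.

Lemma iter_cont (f : T -> T) p : continuous f -> continuous (iter p f).
Proof.
move=> cf; elim: p => [|p IH] x.
- exact: cvg_id.
- exact: (continuous_comp (IH x) (cf (iter p f x))).
Qed.

Lemma sh_cont m : (continuous tau) -> (continuous tau') -> continuous (sh m).
Proof.
by move=> ct ct'; case: m => [p|p]; apply: iter_cont.
Qed.

End Shifts.

Lemma image_closure_sub (T U : topologicalType) (f : T -> U) (A : set T) :
  continuous f -> f @` closure A `<=` closure (f @` A).
Proof.
move=> cf _ [x clx <-].
have cl : closed (f @^-1` closure (f @` A)).
  by apply: preimage_closed; [move=> y _; exact: cf|exact: closed_closure].
have : closure A `<=` f @^-1` closure (f @` A).
  have e := (closure_id _).1 cl; rewrite e; apply: closureS => y Ay.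
  by apply: subset_closure; exists y.
by apply.
Qed.

Section Main.
Variables (T : topologicalType) (h : RR -> T) (tau tau' F : T -> T) (n : nat)
  (gam : 'I_n -> RR -> T) (k : nat) (br : 'I_k -> 'I_n) (lo hi : 'I_k -> RR)
  (ell : 'I_k -> 'I_n) (per : 'I_k -> int).
Hypotheses (tK : cancel tau tau') (tK' : cancel tau' tau)
  (ct : continuous tau) (ct' : continuous tau')
  (htau : forall x, tau (h x) = h (x + 1))
  (hinj : forall x y, h x = h y -> x = y)
  (hcomp : forall x, ~ range h x ->
     exists t0, closure (cc h x) `&` range h = [set h t0])
  (Fc : continuous F) (D1 : degree_one tau F)
  (SL : sun_like h F gam)
  (BP : basic_partition h tau tau' F gam br lo hi ell per).

Local Notation sh := (Defs.shift tau tau').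
Local Notation pZ := (plusZ tau tau').
Local Notation TRs := (TR h F).
Local Notation X := (Xset h F).
Local Notation pc := (piece gam br lo hi).
Local Notation fol := (follows tau tau' F gam br lo hi).
Local Notation brk := (brk h tau tau' F gam br lo hi).

Lemma tau'_h x : tau' (h x) = h (x - 1).
Proof. by rewrite -[in LHS](subrK 1 x) -htau tK. Qed.

Lemma sh_h m u : sh m (h u) = h (u + m%:~R).
Proof.
case: m => [p|p].
  elim: p u => [|p IH] u; first by rewrite addr0.
  have -> : Posz p.+1 = (Posz p + 1)%R by lia.
  by rewrite -sh_tau // IH htau intrD addrA.
have -> : Negz p = (- Posz p.+1)%R by rewrite NegzE.
elim: p.+1 u => [|q IH] u; first by rewrite /= addr0.
have -> : (- Posz q.+1 = - Posz q - 1)%R by lia.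
by rewrite -sh_tau' // IH tau'_h !intrD !mulrNz addrA.
Qed.

Lemma range_sh m x : ~ range h x -> ~ range h (sh m x).
Proof.
move=> nx [u _ e]; apply: nx; exists (u + (- m)%:~R) => //.
by rewrite -sh_h e shK.
Qed.

Lemma cc_sh m x : ~ range h x -> sh m @` cc h x `<=` cc h (sh m x).
Proof.
move=> nx; apply: connected_component_max.
- by exists x => //; apply: connected_component_refl.
- move=> _ [y cy <-]; apply: range_sh.
  exact: (connected_component_sub cy).
- apply: connected_continuous_connected; first exact: component_connected.
  by apply: continuous_subspaceT; apply: sh_cont.
Qed.

Lemma closure_cc_sh m x t : ~ range h x -> closure (cc h x) (h t) ->
  closure (cc h (sh m x)) (h (t + m%:~R)).
Proof.
move=> nx cl; have := closureS (@cc_sh m x nx); apply.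
apply: (@image_closure_sub _ _ (sh m)); first exact: sh_cont.
by exists (h t) => //; rewrite sh_h.
Qed.

Lemma int_unit (m : int) (a b : RR) : 0 <= a < 1 -> 0 <= b < 1 ->
  b = a + m%:~R -> m = 0.
Proof.
move=> /andP[a0 a1] /andP[b0 b1] e.
have h1 : (m%:~R : RR) < 1 by lra.
have h2 : (-1 : RR) < m%:~R by lra.
have : (m < 1)%R by rewrite -(ltr_int RR) .
have : (-1 < m)%R by rewrite -(ltr_int RR).
lia.
Qed.

Lemma rR_sh m z : rRpre h unit_co z -> rRpre h unit_co (sh m z) -> m = 0.
Proof.
case=> [[u [u01 ->]]|[nz [t [t01 clt]]]].
  rewrite sh_h; case=> [[u' [u'01 /hinj e]]|[nr _]].
    by apply: (int_unit m u u' u01 u'01); rewrite e.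
  by case: nr; exists (u + m%:~R).
case=> [[u' [_ e]]|[_ [t' [t'01 clt']]]].
  by case: (@range_sh m z nz); exists u'.
have [t0 e0] := hcomp _ (@range_sh m z nz).
have c1 : (closure (cc h (sh m z)) `&` range h) (h t') by split => //; exists t'.
have c2 : (closure (cc h (sh m z)) `&` range h) (h (t + m%:~R)).
  by split; [exact: closure_cc_sh|exists (t + m%:~R)].
rewrite e0 in c1 c2; rewrite /= in c1 c2.
by apply: (int_unit m t t' t01 t'01); apply: hinj; rewrite c1 c2.
Qed.

Lemma iterF_tau p x : iter p F (tau x) = tau (iter p F x).
Proof. by elim: p => [|p IH] //=; rewrite IH D1. Qed.

Lemma iterF_sh p m x : iter p F (sh m x) = sh m (iter p F x).
Proof. by apply: sh_comm => //; apply: iterF_tau. Qed.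

Lemma F_sh m x : F (sh m x) = sh m (F x).
Proof. exact: (iterF_sh 1). Qed.

Lemma TR_sh m x : TRs x -> TRs (sh m x).
Proof.
move=> trx.
have Ush : sh m @` (\bigcup_(p in [set: nat]) (iter p F @` range h)) `<=`
           \bigcup_(p in [set: nat]) (iter p F @` range h).
  move=> _ [y [p _ [z [u _ <-] <-]] <-].
  exists p => //; exists (h (u + m%:~R)); first by exists (u + m%:~R).
  by rewrite -iterF_sh sh_h.
have := closureS Ush; apply.
by apply: (@image_closure_sub _ _ (sh m)); [exact: sh_cont|exists x].
Qed.

Lemma nTR_sh m x : ~ TRs x -> ~ TRs (sh m x).
Proof. by move=> nx /(TR_sh (- m) _); rewrite shK. Qed.

Lemma clnTR_sh m x : closure (~` TRs) x -> closure (~` TRs) (sh m x).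
Proof.
move=> cl.
have sub : sh m @` (~` TRs) `<=` ~` TRs by move=> _ [y ny <-]; apply: nTR_sh.
have := closureS sub; apply.
by apply: (@image_closure_sub _ _ (sh m)); [exact: sh_cont|exists x].
Qed.

Lemma intTR_sh m x : interior TRs x -> interior TRs (sh m x).
Proof.
have e : forall y, interior TRs y <-> ~ closure (~` TRs) y.
  by move=> y; rewrite closure_setC /setC /=; split => [a b|a]; [apply: b|apply: contrapT].
rewrite !e => nx c; apply: nx; move: c => /(clnTR_sh (- m) _); by rewrite shK.
Qed.

Lemma range_TR u : TRs (h u).
Proof. by apply: subset_closure; exists 0%N => //; exists (h u) => //; exists u. Qed.

Lemma gam_pos i t : 0 < t <= 1 -> ~ TRs (gam i t) /\ rRpre h unit_co (gam i t).
Proof.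
move=> t01; case: SL => _ SLeq _ _ _.
have : (\bigcup_(i in [set: 'I_n]) (gam i @` [set t | 0 < t <= 1])) (gam i t).
  by exists i => //; exists t.
by rewrite -SLeq; case.
Qed.

Lemma gam_nr i t : 0 < t <= 1 -> ~ range h (gam i t).
Proof. by move=> /(gam_pos i) [nt _] [u _ e]; apply: nt; rewrite -e; apply: range_TR. Qed.

Lemma conn_img i (A : set RR) : A `<=` unit_seg -> is_interval A ->
  connected (gam i @` A).
Proof.
move=> sA iA; case: SL => garc _ _ _ _; have [gc _ _] := garc i.
apply: connected_continuous_connected; first exact/connected_intervalP.
exact: continuous_subspaceW gc.
Qed.

Lemma oc_unit : [set t : RR | 0 < t <= 1] `<=` unit_seg.
Proof. by move=> t /andP[a b]; rewrite /unit_seg /= b andbT ltW. Qed.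

Lemma oc_int : is_interval [set t : RR | 0 < t <= 1].
Proof.
move=> x y /andP[x0 x1] /andP[y0 y1] z /andP[xz zy]; apply/andP; split; lra.
Qed.

Lemma unit_int : is_interval unit_seg.
Proof.
move=> x y /andP[x0 x1] /andP[y0 y1] z /andP[xz zy]; apply/andP; split; lra.
Qed.

Lemma gam0_rR i : rRpre h unit_co (gam i 0).
Proof.
have g1 : (0 : RR) < (1 : RR) <= 1 by apply/andP; split; lra.
have [_ r1] := gam_pos i 1 g1.
have n1 := gam_nr i 1 g1.
case: r1 => [[t [_ e]]|[_ [t1 [t101 cl1]]]]; first by case: n1; exists t.
have Csub : gam i @` [set t | 0 < t <= 1] `<=` cc h (gam i 1).
  apply: connected_component_max; first by exists 1.
  - by move=> _ [t t01 <-]; apply: gam_nr.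
  - exact: conn_img i _ oc_unit oc_int.
case: (pselect (range h (gam i 0))) => [[t _ e]|nr0].
  case: SL => _ _ SLcl _ _.
  have g0 : Xb gam i (gam i 0) by exists 0 => //; rewrite /unit_seg /= lexx ler01.
  rewrite -SLcl in g0.
  have := closureS Csub g0 => clg0.
  have [t0 e0] := hcomp _ n1.
  have c1 : (closure (cc h (gam i 1)) `&` range h) (h t1) by split => //; exists t1.
  have c2 : (closure (cc h (gam i 1)) `&` range h) (gam i 0) by split => //; exists t.
  rewrite e0 /= in c1 c2.
  by left; exists t1; split => //; rewrite c2 c1.
have Dsub : gam i @` unit_seg `<=` cc h (gam i 1).
  apply: connected_component_max; first by exists 1 => //; rewrite /unit_seg /= ler01 lexx.
  - move=> _ [t /andP[ta tb] <-]; case: (eqVneq t 0) => [->//|tn0].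
    by apply: gam_nr; rewrite tb andbT lt_neqAle eq_sym tn0.
  - exact: conn_img i _ (fun x y => y) unit_int.
have c0 : cc h (gam i 1) (gam i 0) by apply: Dsub; exists 0 => //; rewrite /unit_seg /= lexx ler01.
right; split => //; exists t1; split => //.
by rewrite /cc -(same_connected_component c0).
Qed.

Lemma Xb_X i : Xb gam i `<=` X.
Proof.
move=> _ [t /andP[t0 t1] <-]; case: (eqVneq t 0) => [->|tn0].
  split; last exact: gam0_rR.
  case: SL => _ _ SLcl _ _.
  have g0 : Xb gam i (gam i 0) by exists 0 => //; rewrite /unit_seg /= lexx ler01.
  rewrite -SLcl in g0; move: g0; apply: closureS.
  by move=> _ [s s01 <-]; have [] := gam_pos i s s01.
have tp : 0 < t <= 1 by rewrite t1 andbT lt_neqAle eq_sym tn0.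
have [a b] := gam_pos i t tp; split => //; exact: subset_closure.
Qed.

Lemma piece_Xb j : pc j `<=` Xb gam (br j).
Proof.
move=> _ [t /andP[a b] <-]; exists t => //.
have [l0 [lh h1]] := (let: And5 x _ _ _ _ := BP in x) j.
rewrite /unit_seg /=; apply/andP; split; lra.
Qed.

Lemma piece_X j : pc j `<=` X.
Proof. by move=> z /piece_Xb; apply: Xb_X. Qed.

Lemma X_sh m z : X z -> X (sh m z) -> m = 0.
Proof. by move=> [_ a] [_ b]; exact: (rR_sh m z a b). Qed.

Lemma pZ_X (A : set T) z : A `<=` X -> pZ A z -> X z -> A z.
Proof.
move=> AX [m [y [Ay ->]]] Xz.
by have e := X_sh m y (AX _ Ay) Xz; rewrite e.
Qed.

Lemma pZ_sh (A : set T) m z : pZ A z -> pZ A (sh m z).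
Proof. by move=> [m' [y [Ay ->]]]; exists (m + m'), y; rewrite sh_add. Qed.

Lemma pZ_self (A : set T) z : A z -> pZ A z.
Proof. by move=> Az; exists 0, z. Qed.

Lemma fol_sh w m x : fol w x -> fol w (sh m x).
Proof.
elim: w x => [|a w IH] x //= [pa fw]; split; first exact: pZ_sh.
by rewrite F_sh; apply: IH.
Qed.

Lemma fol_rcons w a x : fol (rcons w a) x <-> fol w x /\ pZ (pc a) (iter (size w) F x).
Proof.
elim: w x => [|b w IH] x /=; first by split; [case|case].
by rewrite IH -iterS iterSr; split => [[? [? ?]]|[[? ?] ?]].
Qed.

Lemma brk1 a : brk [:: a] = pc a.
Proof.
apply/seteqP; split.
  move=> z [[x [pa _] /= <-] Xx]; exact: pZ_X _ _ (piece_X a) pa Xx.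
move=> z pz; split; last exact: (piece_X _ _ pz).
by exists z => //; split => //; apply: pZ_self.
Qed.

Lemma brk_rcons w a : w <> [::] -> brk (rcons w a) = pZ (F @` brk w) `&` pc a.
Proof.
case/lastP: w => [//|u b] _.
rewrite /Defs.brk !size_rcons /=.
apply/seteqP; split.
  move=> z [[x /fol_rcons [fw pa] <-] Xz]; rewrite size_rcons in pa.
  have pca := pZ_X _ _ (piece_X a) pa Xz; split => //.
  move: fw => /[dup] fw /fol_rcons [fu [m' [q [pq e]]]].
  exists m', (F q); split; last first.
    by rewrite iterS e F_sh.
  exists q => //; split; last exact: (piece_X _ _ pq).
  exists (sh (- m') x); first exact: fol_sh.
  by rewrite iterF_sh e shK.
move=> z [[m [y [[q [[x fw <-] _] <-] ez]]] pz]; rewrite ez in pz *.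
split; last exact: (piece_X _ _ pz).
exists (sh m x).
  apply/fol_rcons; split; first exact: fol_sh.
  by rewrite iterF_sh size_rcons iterS; apply: pZ_self.
by rewrite iterF_sh iterS.
Qed.


Local Notation peq := (pequiv h tau tau' F gam br lo hi).
Local Notation cls := (cls h tau tau' F gam br lo hi).

Lemma cat_nnil (u w : seq 'I_k) : u <> [::] -> u ++ w <> [::].
Proof. by case: u. Qed.

Lemma rcons_nnil (u : seq 'I_k) a : rcons u a <> [::].
Proof. by case: u. Qed.

Lemma brk_cat u v w : u <> [::] -> v <> [::] -> brk u = brk v ->
  brk (u ++ w) = brk (v ++ w).
Proof.
move=> un vn e; elim/last_ind: w => [|w a IH]; first by rewrite !cats0.
by rewrite -!rcons_cat !brk_rcons ?IH //; apply: cat_nnil.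
Qed.

Lemma peq_refl w : w <> [::] -> peq w w.
Proof. by case: w => [//|a s] _; exists [::], [::], a, s; split => //; rewrite brk1. Qed.

Lemma peq_sym w1 w2 : peq w1 w2 -> peq w2 w1.
Proof. by move=> [u1 [u2 [a [s [e1 e2 b1 b2]]]]]; exists u2, u1, a, s. Qed.

Lemma peq_brk w1 w2 : peq w1 w2 -> brk w1 = brk w2.
Proof.
move=> [u1 [u2 [a [s [-> -> b1 b2]]]]]; rewrite -!cat_rcons.
by apply: brk_cat; rewrite ?b1 ?b2 //; apply: rcons_nnil.
Qed.

Lemma peq_nnil w1 w2 : peq w1 w2 -> w1 <> [::].
Proof. by move=> [u1 [u2 [a [s [-> _ _ _]]]]]; case: u1. Qed.

Lemma peq_trans_aux w1 w2 w3 u1 u2 a s u2' u3 b t :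
  w1 = u1 ++ a :: s -> w2 = u2 ++ a :: s -> brk (rcons u1 a) = pc a ->
  brk (rcons u2 a) = pc a ->
  w2 = u2' ++ b :: t -> w3 = u3 ++ b :: t -> brk (rcons u2' b) = pc b ->
  brk (rcons u3 b) = pc b -> (size u2' <= size u2)%N -> peq w1 w3.
Proof.
move=> e1 e2 b1 b2 e2' e3 b2' b3 sz.
set c := drop (size u2') u2.
have eu2 : u2 = u2' ++ c.
  rewrite -[LHS](cat_take_drop (size u2')); congr (_ ++ _).
  have := congr1 (take (size u2')) (etrans (esym e2) e2').
  by rewrite takel_cat // take_size_cat.
have ec : c ++ a :: s = b :: t.
  have := congr1 (drop (size u2')) (etrans (esym e2) e2').
  by rewrite {1}eu2 -catA !drop_size_cat.
exists u1, (u3 ++ c), a, s; split => //.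
  by rewrite e3 -ec catA.
case: c ec eu2 => [|b' c'] /=.
  by case=> -> _ _; rewrite cats0.
case=> ebb _ eu2; rewrite -ebb in b3 b2'.
rewrite rcons_cat rcons_cons -cat_rcons.
rewrite (brk_cat (rcons u3 b') (rcons u2' b') (rcons c' a)); try exact: rcons_nnil.
  by rewrite cat_rcons -rcons_cons -rcons_cat -eu2.
by rewrite b3 b2'.
Qed.

Lemma peq_trans w1 w2 w3 : peq w1 w2 -> peq w2 w3 -> peq w1 w3.
Proof.
move=> [u1 [u2 [a [s [e1 e2 b1 b2]]]]] [u2' [u3 [b [t [e2' e3 b2' b3]]]]].
case: (leqP (size u2') (size u2)) => sz.
  exact: (peq_trans_aux _ _ _ _ _ _ _ _ _ _ _ e1 e2 b1 b2 e2' e3 b2' b3 sz).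
apply: peq_sym; exact: (peq_trans_aux _ _ _ _ _ _ _ _ _ _ _ e3 e2' b3 b2' e2 e1 b2 b1 (ltnW sz)).
Qed.

Lemma cls_nil : cls [::] = set0.
Proof. by apply/seteqP; split => // w [u1 [u2 [a [s [e _ _ _]]]]]; case: u1 e. Qed.

Lemma cls_eq w1 w2 : peq w1 w2 -> cls w1 = cls w2.
Proof.
move=> e; apply/seteqP; split => w /= p.
  exact: (peq_trans _ _ _ (peq_sym _ _ e) p).
exact: (peq_trans _ _ _ e p).
Qed.

Lemma cls_peq w1 w2 : w1 <> [::] -> cls w1 = cls w2 -> peq w2 w1.
Proof.
move=> n1 e; have : cls w1 w1 by apply: peq_refl.
by rewrite e.
Qed.

Lemma peq_rcons w1 w2 a : peq w1 w2 -> peq (rcons w1 a) (rcons w2 a).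
Proof.
move=> [u1 [u2 [b [s [-> -> b1 b2]]]]].
by exists u1, u2, b, (rcons s a); rewrite !rcons_cat.
Qed.

Local Notation sigh := (sig_height h tau tau' F gam br lo hi).
Local Notation HH := (Defs.H h tau tau' F gam br lo hi).

Lemma sig_exists w : w <> [::] -> exists hh, sigh w hh.
Proof.
move=> wn.
pose P := fun i => (i < size w)%N && `[< peq w (drop i w) >].
have exP : exists i, P i.
  exists 0%N; apply/andP; split; first by clear P; case: w wn.
  by apply/asboolP; rewrite drop0; apply: peq_refl.
have ubP : forall i, P i -> (i <= size w)%N by move=> i /andP[/ltnW].
case: (ex_maxnP exP ubP) => i /andP[ilt /asboolP pi] maxi.
exists (size w - i - 1)%N, i; split => //; first lia.
move=> j /andP[ij jw] pj.
have : P j by apply/andP; split => //; apply/asboolP.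
by move/maxi; lia.
Qed.

Lemma sig_size w hh : sigh w hh -> w <> [::].
Proof. by move=> [i [e _ _]] ew; rewrite ew in e. Qed.

Lemma sig_prefix w hh u a s : sigh w hh -> w = u ++ a :: s ->
  brk (rcons u a) = pc a -> exists i, [/\ (i + hh).+1 = size w,
    peq w (drop i w), (forall j, (i < j < size w)%N -> ~ peq w (drop j w))
    & (size u <= i)%N].
Proof.
move=> [i [e1 e2 e3]] ew bu; exists i; split => //.
rewrite leqNgt; apply/negP => lt.
apply: (e3 (size u)); first by rewrite lt ew size_cat /=; lia.
rewrite ew drop_size_cat //; exists u, [::], a, s; split => //.
by rewrite brk1.
Qed.

Lemma sig_unique_aux w w' hh hh' : peq w w' -> sigh w hh -> sigh w' hh' ->
  (hh < hh')%N -> False.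
Proof.
move=> p sw sw' lt; have [u1 [u2 [a [s [e1 e2 b1 b2]]]]] := p.
have [i [si pi mi ui]] := sig_prefix _ _ _ _ _ sw e1 b1.
have [i' [si' pi' mi' ui']] := sig_prefix _ _ _ _ _ sw' e2 b2.
set L := size (a :: s).
have sw1 : size w = (size u1 + L)%N by rewrite e1 size_cat.
have sw2 : size w' = (size u2 + L)%N by rewrite e2 size_cat.
pose j := (size u2 + (L - hh.+1))%N.
have dj : drop j w' = drop i w.
  rewrite e2 e1 /j drop_cat ltnNge leq_addr /= addKn.
  rewrite drop_cat ltnNge ui /=; congr drop; lia.
apply: (mi' j); first by apply/andP; split; lia.
rewrite dj; exact: (peq_trans w' w _ (peq_sym _ _ p) pi).
Qed.

Lemma sig_unique w w' hh hh' : peq w w' -> sigh w hh -> sigh w' hh' -> hh = hh'.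
Proof.
move=> p s s'; case: (ltngtP hh hh') => // lt.
  by case: (sig_unique_aux w w' hh hh' p s s' lt).
by case: (sig_unique_aux w' w hh' hh (peq_sym _ _ p) s' s lt).
Qed.

Lemma Hval w hh : sigh w hh -> HH (cls w) = hh.
Proof.
move=> s; rewrite /Defs.H.
have ex : exists hh0, [set hh | exists w', cls w = cls w' /\ sigh w' hh] hh0.
  by exists hh, w.
have [w' [e s']] := xgetPex 0%N ex.
have p := cls_peq _ _ (sig_size _ _ s) e.
exact: (sig_unique _ _ _ _ p s' s).
Qed.

Lemma sig1 a : sigh [:: a] 0.
Proof.
exists 0%N; split => //; first exact: peq_refl.
by move=> j /andP[j0 j1]; exfalso; simpl in j1; lia.
Qed.

Lemma H1 a : HH (cls [:: a]) = 0%N.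
Proof. exact: Hval (sig1 a). Qed.

Lemma sig_step w a hh : sigh w hh ->
  exists hh', sigh (rcons w a) hh' /\ (hh' = hh.+1 \/ peq (rcons w a) [:: a]).
Proof.
move=> sw; have [i [si pi mi]] := sw.
have [hh' sw'] := sig_exists (rcons w a) (rcons_nnil _ _).
exists hh'; split => //.
have [i' [si' pi' mi']] := sw'.
rewrite size_rcons in si' mi'.
have pia : peq (rcons w a) (drop i (rcons w a)).
  by rewrite drop_rcons; [apply: peq_rcons|lia].
have ii' : (i <= i')%N.
  rewrite leqNgt; apply/negP => lt; apply: (mi' i) => //.
  by apply/andP; split; lia.
case: (ltngtP i i') ii' => // [lt _|eq _]; last by left; lia.
right; move: pi' => [u1 [u2 [b [s1 [e1 e2 b1 b2]]]]].
case/lastP: s1 e1 e2 => [|s0 a'] e1 e2.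
  rewrite cats1 in e1; case: (rcons_inj e1) => eu eb.
  rewrite -eu -eb in b1.
  exists w, [::], a, [::]; split => //; first by rewrite cats1.
  by rewrite brk1.
exfalso.
rewrite -rcons_cons -rcons_cat in e1; case: (rcons_inj e1) => ew ea.
have il : (i' <= size w)%N by lia.
rewrite drop_rcons // -rcons_cons -rcons_cat in e2; case: (rcons_inj e2) => ed _.
have il2 : (i' < size w)%N.
  have := congr1 size ed; rewrite size_drop size_cat /=; lia.
apply: (mi i'); first by apply/andP; split.
rewrite ed ew; exists u1, u2, b, s0; split => //.
Qed.

Local Notation isv := (is_vertex h tau tau' F gam br lo hi).
Local Notation arr := (arrow h tau tau' F gam br lo hi).

Lemma vert_rep al w : isv al -> al = cls w -> w <> [::] /\ brk w !=set0.
Proof.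
move=> [w0 [n0 b0 e0]] e.
have ew : cls w0 = cls w by rewrite -e0 -e.
have nw : w <> [::].
  move=> wn; have : cls w0 w0 by apply: peq_refl.
  by rewrite ew wn cls_nil.
split => //.
have p := cls_peq _ _ n0 ew.
by rewrite (peq_brk _ _ p).
Qed.

Lemma H_arrow al be : arr al be -> HH be = 0%N \/ HH be = (HH al).+1.
Proof.
move=> [va vb [w [a [ea eb]]]].
have [nw _] := vert_rep _ _ va ea.
have [hh sw] := sig_exists w nw.
have [hh' [sw' [e|p]]] := sig_step w a hh sw.
  by right; rewrite ea eb (Hval _ _ sw) (Hval _ _ sw') e.
by left; rewrite eb (cls_eq _ _ p) H1.
Qed.

Lemma H0_basis al : isv al -> HH al = 0%N -> exists a, al = cls [:: a].
Proof.
move=> [w [nw _ e]] h0.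
have [hh sw] := sig_exists w nw.
have := Hval _ _ sw; rewrite -e h0 => e0; rewrite -e0 in sw.
have [i [si pi _]] := sw.
have : size (drop i w) = 1%N by rewrite size_drop; lia.
case E: (drop i w) => [|x [|y z]] // _.
by exists x; rewrite e (cls_eq _ _ pi) E.
Qed.

Lemma sh_add_ m m' x : sh m (sh m' x) = sh (m + m') x.
Proof. exact: sh_add. Qed.
Lemma shK_ m x : sh (- m) (sh m x) = x.
Proof. exact: shK. Qed.
Lemma shKV_ m x : sh m (sh (- m) x) = x.
Proof. exact: shKV. Qed.
Lemma sh_cont_ m : continuous (sh m).
Proof. exact: sh_cont. Qed.

Lemma arc_parts i : [/\ {within unit_seg, continuous gam i},
  (forall x y, unit_seg x -> unit_seg y -> gam i x = gam i y -> x = y)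
  & forall U : set RR, open U -> exists V : set T,
      open V /\ gam i @` (U `&` unit_seg) = V `&` gam i @` unit_seg].
Proof. by case: SL => garc _ _ _ _; exact: garc. Qed.

Lemma lohi_unit j t : lo j <= t <= hi j -> unit_seg t.
Proof.
case: BP => BPlo _ _ _ _; have [a [b c]] := BPlo j.
move=> /andP[d e]; rewrite /unit_seg /=; apply/andP; split; lra.
Qed.

Lemma K_shape b (I : set RR) (HIs : forall t, I t -> lo b <= t <= hi b) m y :
  (F @` (gam (br b) @` I)) y -> X (sh m y) ->
  exists t, [/\ unit_seg t, y = sh (per b) (gam (ell b) t) & sh m y = gam (ell b) t].
Proof.
move=> [_ [t0 It0 <-] <-] Xy.
have pc0 : pc b (gam (br b) t0) by exists t0 => //; exact: HIs.
case: BP => _ _ BPF _ _.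
case: (BPF b _ (ex_intro2 _ _ _ pc0 erefl)) => [[x [t ut <-] ex]|iy].
  exists t; split => //.
  have Xx : X (gam (ell b) t) by apply: (Xb_X (ell b)); exists t.
  rewrite -ex sh_add_ // in Xy; have e0 := X_sh _ _ Xx Xy.
  by rewrite -ex sh_add_ // e0.
exfalso; have := intTR_sh m _ iy.
case: Xy => + _; rewrite closure_setC; by move=> a1 a2; apply: a1.
Qed.

Lemma step b (I : set RR) : I (lo b) -> (forall t, I t -> lo b <= t <= hi b) ->
  is_interval I ->
  let K := F @` (gam (br b) @` I) in
  let E := [set t | unit_seg t /\ pZ K (gam (ell b) t)] in
  [/\ E 0, (forall s t, 0 <= s -> s <= t -> E t -> E s) &
   (forall a z, (pZ K `&` pc a) z <-> br a = ell b /\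
       exists t, [/\ E t, lo a <= t <= hi a & z = gam (ell b) t])].
Proof.
move=> Il HIs HIi K E.
have [gc gi go] := arc_parts (ell b).
have shape := K_shape b I HIs.
have E0 : E 0.
  split; first by rewrite /unit_seg /= lexx ler01.
  exists (- (per b)), (F (gam (br b) (lo b))); split.
    by exists (gam (br b) (lo b)) => //; exists (lo b).
  by case: BP => _ _ _ BPmin _; rewrite BPmin shK_.
have EK : forall t, E t -> exists y, K y /\ gam (ell b) t = sh (- (per b)) y.
  move=> t [ut [m [y [Ky e]]]].
  have Xe : X (sh m y) by rewrite -e; apply: (Xb_X (ell b)); exists t.
  have [t' [ut' ey em]] := shape m y Ky Xe.
  by exists y; split => //; rewrite ey shK_ -em -e.
have KB : forall y, K y -> (exists u, unit_seg u /\ y = sh (per b) (gam (ell b) u)) \/ interior TRs y.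
  move=> _ [_ [t0 It0 <-] <-].
  have pc0 : pc b (gam (br b) t0) by exists t0 => //; exact: HIs.
  case: BP => _ _ BPF _ _.
  case: (BPF b _ (ex_intro2 _ _ _ pc0 erefl)) => [[x [u uu <-] ex]|iy]; last by right.
  by left; exists u; split.
have IU : I `<=` unit_seg by move=> t It; apply: (lohi_unit b); apply: HIs.
have Edown : forall s t, 0 <= s -> s <= t -> E t -> E s.
  move=> s t s0 st Et.
  case: (eqVneq s 0) => [->//|sn0].
  case: (eqVneq s t) => [->//|snt].
  have s_pos : 0 < s by rewrite lt_neqAle eq_sym sn0.
  have slt : s < t by rewrite lt_neqAle snt.
  have ut := Et.1; move: (ut) => /andP[t0 t1].
  have us : unit_seg s by apply/andP; split; lra.
  apply: contrapT => nEs.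
  set K' := sh (- (per b)) @` K.
  have cK' : connected K'.
    apply: connected_continuous_connected; last by apply: continuous_subspaceT; apply: sh_cont_.
    apply: connected_continuous_connected; last by apply: continuous_subspaceT.
    exact: conn_img.
  set O := sh (per b) @^-1` interior TRs.
  have oO : open O by apply: open_comp; [move=> x _; apply: sh_cont_|exact: open_interior].
  have OTR : O `<=` TRs.
    by move=> x Ox; have := interior_subset Ox => /(TR_sh (- (per b)) _); rewrite shK_.
  have K'cov : forall x, K' x -> (exists u, [/\ unit_seg u, E u & x = gam (ell b) u]) \/ O x.
    move=> _ [y Ky <-]; case: (KB y Ky) => [[u [uu ey]]|iy].
      left; exists u; split => //; last by rewrite ey shK_.
      by split => //; exists (- per b), y; split => //; rewrite ey shK_.
    by right; rewrite /O /= shKV_.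
  have inK' : forall u, E u -> K' (gam (ell b) u).
    by move=> u /EK [y [Ky ->]]; exists y.
  have [V0 [oV0 eV0]] := go [set r | s < r] (open_gt (y:=s)).
  have [W0 [oW0 eW0]] := go [set r | r < s] (open_lt (y:=s)).
  have inV : forall u, unit_seg u -> s < u -> V0 (gam (ell b) u).
    move=> u uu su.
    have : (gam (ell b) @` ([set r | s < r] `&` unit_seg)) (gam (ell b) u) by exists u.
    by rewrite eV0; case.
  have inW : forall u, unit_seg u -> u < s -> W0 (gam (ell b) u).
    move=> u uu su.
    have : (gam (ell b) @` ([set r | r < s] `&` unit_seg)) (gam (ell b) u) by exists u.
    by rewrite eW0; case.
  have notW : forall u, unit_seg u -> s <= u -> ~ W0 (gam (ell b) u).
    move=> u uu su Wu.
    have : (W0 `&` gam (ell b) @` unit_seg) (gam (ell b) u) by split => //; exists u.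
    rewrite -eW0 => -[r [rs ur] e].
    have := gi _ _ ur uu e; rewrite /= in rs; lra.
  have notV : forall u, unit_seg u -> u <= s -> ~ V0 (gam (ell b) u).
    move=> u uu su Vu.
    have : (V0 `&` gam (ell b) @` unit_seg) (gam (ell b) u) by split => //; exists u.
    rewrite -eV0 => -[r [rs ur] e].
    have := gi _ _ ur uu e; rewrite /= in rs; lra.
  have nTRg : forall u, unit_seg u -> 0 < u -> ~ TRs (gam (ell b) u).
    move=> u /andP[_ u1] u0; have [] := gam_pos (ell b) u; last by move=> a _; exact: a.
    by rewrite u0 u1.
  have oC : open (V0 `&` ~` TRs) by apply: openI => //; rewrite openC; exact: closed_closure.
  have cC : closed (~` (W0 `|` O)) by rewrite closedC; exact: openU.
  have eB : K' `&` (V0 `&` ~` TRs) = K' `&` ~` (W0 `|` O).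
    apply/seteqP; split => x [K'x Cx]; split => //.
      move: Cx => [Vx nTx] [Wx|Ox]; last exact: nTx (OTR _ Ox).
      case: (K'cov x K'x) => [[u [uu Eu ex]]|Ox]; last exact: nTx (OTR _ Ox).
      rewrite ex in Vx Wx; case: (leP u s) => us'.
        exact: notV u uu us' Vx.
      exact: notW u uu (ltW us') Wx.
    case: (K'cov x K'x) => [[u [uu Eu ex]]|Ox]; last by case: Cx; right.
    have nus : u != s by apply/eqP => eus; apply: nEs; rewrite -eus.
    case: (ltgtP u s) nus => // [us'|us'] _.
      by case: Cx; left; rewrite ex; apply: inW.
    rewrite ex; split; first exact: inV.
    by apply: nTRg => //; lra.
  have B0 : (K' `&` (V0 `&` ~` TRs)) !=set0.
    exists (gam (ell b) t); split; first exact: inK'.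
    by split; [apply: inV|apply: nTRg => //; lra].
  have eK' := cK' _ B0 (ex_intro2 _ _ _ oC erefl) (ex_intro2 _ _ _ cC eB).
  have : (K' `&` (V0 `&` ~` TRs)) (gam (ell b) 0) by rewrite eK'; apply: inK'.
  move=> [_ [V _]]; apply: (notV 0) V; last by lra.
  by rewrite /unit_seg /= lexx ler01.
split => // a z; split.
  move=> [[m [y [Ky ez]]] pz].
  have Xz : X z := piece_X a z pz.
  rewrite ez in Xz; have [t [ut ey em]] := shape m y Ky Xz.
  have zt : z = gam (ell b) t by rewrite ez em.
  have [t'' lt'' ez''] := pz.
  have ut'' := lohi_unit a t'' lt''.
  have ebr : br a = (ell b).
    case: (eqVneq (br a) (ell b)) => // ne; exfalso.
    case: SL => _ _ _ SLdisj _.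
    have : (Xb gam (br a) `&` Xb gam (ell b)) z by split; [exists t''|exists t => //; rewrite zt].
    by rewrite SLdisj.
  split => //; exists t; split => //.
    by split => //; exists m, y; split => //; rewrite -zt.
  rewrite ebr in ez''; have e := gi _ _ ut'' ut (etrans ez'' zt).
  by rewrite -e.
move=> [ebr [t [[ut pk] lt ->]]]; split => //.
by exists t => //; rewrite ebr.
Qed.

Lemma fp_of_I u b (I : set RR) : brk (rcons u b) = gam (br b) @` I -> I (lo b) ->
  (forall t, I t -> lo b <= t <= hi b) -> is_interval I ->
  exists E : set RR, [/\ (forall s t, 0 <= s -> s <= t -> E t -> E s) &
    forall a, brk (rcons (rcons u b) a) =
      [set z | br a = ell b /\ exists t, [/\ E t, lo a <= t <= hi a & z = gam (ell b) t]]].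
Proof.
move=> eb Il HIs HIi.
case: (step b I Il HIs HIi) => E0 Edown char.
eexists; split; first exact: Edown.
move=> a; rewrite brk_rcons; last exact: rcons_nnil.
rewrite eb; apply/seteqP; split => z; by move/char.
Qed.

Lemma brk_prev u b a : brk (rcons (rcons u b) a) !=set0 -> brk (rcons u b) !=set0.
Proof.
rewrite brk_rcons; last exact: rcons_nnil.
by move=> [z [[m [y [[x bx _] _]]] _]]; exists x.
Qed.

Lemma lo_ge0 a : 0 <= lo a.
Proof. by case: BP => BPlo _ _ _ _; have [] := BPlo a. Qed.
Lemma lo_hi a : lo a <= hi a.
Proof. by case: BP => BPlo _ _ _ _; have [_ []] := BPlo a. Qed.

Lemma Inv w b : brk (rcons w b) !=set0 -> exists I : set RR,
  [/\ brk (rcons w b) = gam (br b) @` I, I (lo b),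
      (forall t, I t -> lo b <= t <= hi b) & is_interval I].
Proof.
elim/last_ind: w b => [|u c IH] b.
  move=> _; exists [set t | lo b <= t <= hi b]; split.
  - by rewrite /= brk1.
  - by rewrite /= lexx lo_hi.
  - by [].
  - move=> x y /andP[x0 x1] /andP[y0 y1] z /andP[xz zy]; apply/andP; split; lra.
move=> ne; have [I [eb Il HIs HIi]] := IH c (brk_prev _ _ _ ne).
have [E [Edown eE]] := fp_of_I u c I eb Il HIs HIi.
move: ne; rewrite eE => -[z0 [ebr [t0 [Et0 /andP[l0 h0] _]]]].
exists [set t | E t /\ lo b <= t <= hi b]; split.
- rewrite ebr; apply/seteqP; split.
    by move=> _ [_ [t [Et lt ->]]]; exists t.
  by move=> _ [t [Et lt] <-]; split => //; exists t.
- split; last by rewrite lexx lo_hi.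
  by apply: (Edown _ t0) => //; exact: lo_ge0.
- by move=> t [].
- move=> x y [Ex /andP[x0 x1]] [Ey /andP[y0 y1]] z /andP[xz zy]; split.
    apply: (Edown _ y) => //; have := lo_ge0 b; lra.
  apply/andP; split; lra.
Qed.

Lemma P3 u b a a' : brk (rcons (rcons u b) a) !=set0 ->
  brk (rcons (rcons u b) a) <> pc a ->
  brk (rcons (rcons u b) a') !=set0 ->
  brk (rcons (rcons u b) a') <> pc a' -> a = a'.
Proof.
move=> ne1 np1 ne2 np2.
have [I [eb Il HIs HIi]] := Inv u b (brk_prev _ _ _ ne1).
have [E [Edown eE]] := fp_of_I u b I eb Il HIs HIi.
have key : forall c, brk (rcons (rcons u b) c) !=set0 ->
    brk (rcons (rcons u b) c) <> pc c -> [/\ br c = ell b, E (lo c) & ~ E (hi c)].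
  move=> c ne np; move: (ne); rewrite eE => -[z [ebr [t0 [Et0 /andP[l0 h0] _]]]].
  split => //; first by apply: (Edown _ t0) => //; exact: lo_ge0.
  move=> Eh; apply: np; rewrite eE; apply/seteqP; split.
    by move=> _ [_ [t [Et lt ->]]]; exists t => //; rewrite ebr.
  move=> _ [t lt <-]; split => //; exists t; split => //; last by rewrite ebr.
  move: lt => /andP[lt1 lt2]; apply: (Edown _ (hi c)) => //.
  have := lo_ge0 c; lra.
have [b1 El1 nEh1] := key a ne1 np1.
have [b2 El2 nEh2] := key a' ne2 np2.
have gen : forall c c', br c = ell b -> br c' = ell b -> E (lo c') -> ~ E (hi c) ->
    lo c <= lo c' -> c = c'.
  move=> c c' bc bc' El' nEh lc.
  have lt : lo c' < hi c.
    rewrite ltNge; apply/negP => hl; apply: nEh; apply: (Edown _ (lo c')) => //.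
    have := lo_ge0 c; have := lo_hi c; lra.
  case: (eqVneq c c') => // ne; exfalso.
  case: BP => _ BPdisj _ _ _.
  have : (pc c `&` pc c') (gam (ell b) (lo c')).
    split.
      exists (lo c'); first by apply/andP; split; lra.
      by rewrite bc.
    exists (lo c'); first by apply/andP; split; [exact: lexx|exact: lo_hi].
    by rewrite bc'.
  by rewrite BPdisj.
case: (leP (lo a) (lo a')) => l.
  exact: gen.
apply/esym; apply: gen => //; exact: ltW.
Qed.

Local Notation Ip := (Ipath h tau tau' F gam br lo hi).
Local Notation pin := (path_in h tau tau' F gam br lo hi).
Local Notation comp := (component h tau tau' F gam br lo hi).
Local Notation infp := (infinite_path h tau tau' F gam br lo hi).
Local Notation scon := (strongly_connected h tau tau' F gam br lo hi).

Lemma Ip_H be : Ip be -> forall p, HH (be p) = p.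
Proof.
move=> [ib h0 hp]; elim=> [//|p IH].
case: (H_arrow _ _ (ib p)) => e; last by rewrite e IH.
by have := hp p.+1 (ltn0Sn p); rewrite e.
Qed.

Lemma peq_piece w a : w <> [::] -> brk (rcons w a) = pc a -> peq (rcons w a) [:: a].
Proof. by move=> _ e; exists w, [::], a, [::]; rewrite cats1 brk1. Qed.

Lemma Ip_unique be be' : Ip be -> Ip be' -> be 0%N = be' 0%N -> be = be'.
Proof.
move=> [ib h0 hp] [ib' h0' hp'] e0; apply: funext.
elim=> [//|p IH].
have [va vb [w [a [ea eb]]]] := ib p.
have [va' vb' [w' [a' [ea' eb']]]] := ib' p.
have [nw bw] := vert_rep _ _ va ea.
have ew : cls w = cls w' by rewrite -ea -ea' IH.
have pw := cls_peq _ _ nw ew.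
have eb2 : be' p.+1 = cls (rcons w a') by rewrite eb'; apply: cls_eq; apply: peq_rcons.
have [_ bwa] := vert_rep _ _ vb eb.
have [_ bwa'] := vert_rep _ _ vb' eb2.
have npa : brk (rcons w a) <> pc a.
  move=> E; have := hp p.+1 (ltn0Sn p).
  by rewrite eb (cls_eq _ _ (peq_piece _ _ nw E)) H1.
have npa' : brk (rcons w a') <> pc a'.
  move=> E; have := hp' p.+1 (ltn0Sn p).
  by rewrite eb2 (cls_eq _ _ (peq_piece _ _ nw E)) H1.
case/lastP: w ea nw ew pw eb eb2 bw bwa bwa' npa npa' => [//|u b] ea nw ew pw eb eb2 bw bwa bwa' npa npa'.
have eaa := P3 u b a a' bwa npa bwa' npa'.
by rewrite eb eb2 eaa.
Qed.

Lemma Ip_basis be : Ip be -> exists a, be 0%N = cls [:: a].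
Proof.
move=> [ib h0 _]; have [va _ _] := ib 0%N.
exact: H0_basis.
Qed.

Lemma In_mem (A : eqType) (x : A) (s : seq A) : x \in s -> List.In x s.
Proof.
elim: s => [//|y s IH]; rewrite in_cons => /orP[/eqP ->|xs]; first by left.
by right; apply: IH.
Qed.

Lemma part2 : exists s : seq (nat -> set (seq 'I_k)), (size s <= k)%N /\
      forall be, Ip be -> List.In be s.
Proof.
have ch : forall a : 'I_k, exists f : nat -> set (seq 'I_k),
    (exists be, Ip be /\ be 0%N = cls [:: a]) -> Ip f /\ f 0%N = cls [:: a].
  move=> a; case: (pselect (exists be, Ip be /\ be 0%N = cls [:: a])) => [[be hb]|nb].
    by exists be.
  by exists (fun _ => set0).
have [f hf] := choice ch.
exists (map f (enum 'I_k)); split; first by rewrite size_map size_enum_ord.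
move=> be ib; have [a ea] := Ip_basis be ib.
have [ifa fa0] := hf a (ex_intro _ be (conj ib ea)).
have -> : be = f a by apply: Ip_unique => //; rewrite ea fa0.
apply: List.in_map; apply: In_mem; exact: mem_enum.
Qed.

Lemma path_weaken (C D : set (set (seq 'I_k))) u v : C `<=` D -> pin C u v -> pin D u v.
Proof.
move=> CD [L [f [L0 f0 fL ar inC]]]; exists L, f; split => // i iL.
exact/CD/inC.
Qed.

Lemma path_cat C u v w : pin C u v -> pin C v w -> pin C u w.
Proof.
move=> [L1 [f1 [L10 f10 f1L ar1 in1]]] [L2 [f2 [L20 f20 f2L ar2 in2]]].
pose f := fun i => if (i <= L1)%N then f1 i else f2 (i - L1)%N.
have fL : forall i, (L1 <= i)%N -> f i = f2 (i - L1)%N.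
  move=> i li; rewrite /f; case: (leqP i L1) => // il.
  have -> : i = L1 by apply/eqP; rewrite eqn_leq il li.
  by rewrite subnn f20 f1L.
have fS : forall i, (i <= L1)%N -> f i = f1 i by move=> i il; rewrite /f il.
exists (L1 + L2)%N, f; split.
- by rewrite addn_gt0 L10.
- by rewrite fS.
- by rewrite fL ?leq_addr // addKn.
- move=> i iL; case: (ltnP i L1) => il.
    by rewrite !fS //; [apply: ar1|exact: ltnW].
  rewrite !fL //; last exact: leqW.
  by rewrite subSn //; apply: ar2; lia.
- move=> i iL; case: (leqP i L1) => il; first by rewrite fS //; apply: in1.
  by rewrite fL; [apply: in2; lia|exact: ltnW].
Qed.

Lemma path_sub (L : nat) (f : nat -> set (seq 'I_k)) :
  (forall i, (i < L)%N -> arr (f i) (f i.+1)) ->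
  forall i j, (i < j)%N -> (j <= L)%N -> pin setT (f i) (f j).
Proof.
move=> ar i j ij jL; exists (j - i)%N, (fun m => f (i + m)%N); split => //.
- by rewrite subn_gt0.
- by rewrite addn0.
- by rewrite subnKC // ltnW.
- by move=> m mL; rewrite addnS; apply: ar; lia.
Qed.

Lemma path_end_vertex C u v : pin C u v -> isv v.
Proof.
move=> [L [f [L0 f0 fL ar _]]]; have := ar L.-1.
rewrite prednK // -fL.
by move=> /(_ (leqnn L)) [_ vv _].
Qed.

Lemma comp_share C1 C2 al : comp C1 -> comp C2 -> C1 al -> C2 al -> C1 = C2.
Proof.
move=> [_ [s1 sc1] m1] [_ [s2 sc2] m2] a1 a2.
set D := C1 `|` C2.
have sD : scon D.
  split; first by move=> x [/s1|/s2].
  have toal : forall x, D x -> pin D x al.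
    by move=> x [x1|x2]; [apply: (path_weaken C1); [move=> ? ?; left|apply: sc1]|
                          apply: (path_weaken C2); [move=> ? ?; right|apply: sc2]].
  have fromal : forall x, D x -> pin D al x.
    by move=> x [x1|x2]; [apply: (path_weaken C1); [move=> ? ?; left|apply: sc1]|
                          apply: (path_weaken C2); [move=> ? ?; right|apply: sc2]].
  move=> x y Dx Dy; apply: (path_cat _ _ al); [exact: toal|exact: fromal].
have e1 := m1 D (fun x (hx : C1 x) => or_introl hx) sD.
have e2 := m2 D (fun x (hx : C2 x) => or_intror hx) sD.
by rewrite -e1 -e2.
Qed.

Lemma comp_H0 C : comp C -> exists al, C al /\ HH al = 0%N.
Proof.
move=> [[u Cu] [sub sc] _]; apply: contrapT => nH.
have [L [f [L0 f0 fL ar inC]]] := sc u u Cu Cu.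
have pos : forall i, (i <= L)%N -> (0 < HH (f i))%N.
  move=> i iL; rewrite lt0n; apply/negP => /eqP e; apply: nH.
  by exists (f i); split => //; apply: inC.
have lin : forall i, (i <= L)%N -> HH (f i) = (HH u + i)%N.
  elim=> [|i IH] iL; first by rewrite f0 addn0.
  case: (H_arrow _ _ (ar i iL)) => e.
    by have := pos i.+1 iL; rewrite e.
  by rewrite e IH ?addnS // ltnW.
have := lin L (leqnn L); rewrite fL; lia.
Qed.

Lemma part1 : (forall C, comp C -> exists al, C al /\ HH al = 0%N) /\
   (exists s : seq (set (set (seq 'I_k))), (size s <= k)%N /\
      forall C, comp C -> List.In C s).
Proof.
split; first exact: comp_H0.
have ch : forall a : 'I_k, exists D : set (set (seq 'I_k)),
    (exists C, comp C /\ C (cls [:: a])) -> comp D /\ D (cls [:: a]).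
  move=> a; case: (pselect (exists C, comp C /\ C (cls [:: a]))) => [[C hC]|nC].
    by exists C.
  by exists set0.
have [f hf] := choice ch.
exists (map f (enum 'I_k)); split; first by rewrite size_map size_enum_ord.
move=> C cC; have [al [Cal Hal]] := comp_H0 C cC.
have [_ [sub _] _] := cC.
have [a ea] := H0_basis al (sub _ Cal) Hal.
rewrite ea in Cal.
have [cf fa] := hf a (ex_intro _ C (conj cC Cal)).
have -> : C = f a by apply: (comp_share _ _ (cls [:: a])).
apply: List.in_map; apply: In_mem; exact: mem_enum.
Qed.

Lemma comp_of v : pin setT v v -> comp [set x | pin setT v x /\ pin setT x v].
Proof.
move=> vv; set C := [set x | pin setT v x /\ pin setT x v].
have Cv : C v by split.
split; first by exists v.
  split; first by move=> x [vx _]; exact: path_end_vertex vx.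
  move=> x y [vx xv] [vy yv].
  have [L [f [L0 f0 fL ar _]]] := path_cat _ _ _ _ xv vy.
  exists L, f; split => // i iL; split.
    case: (posnP i) => [->|ip]; first by rewrite f0.
    apply: (path_cat _ _ x) => //; rewrite -f0; exact: (path_sub L f ar 0 i ip iL).
  case: (ltnP i L) => il.
    apply: (path_cat _ _ y) => //; rewrite -fL; exact: (path_sub L f ar i L il (leqnn L)).
  have -> : i = L by apply/eqP; rewrite eqn_leq iL il.
  by rewrite fL.
move=> D CD [subD scD]; apply/seteqP; split; last exact: CD.
move=> d Dd; have Dv := CD v Cv.
by split; apply: (path_weaken D) => //; apply: scD.
Qed.

Lemma path_al al : infp al -> forall i j, (i < j)%N -> pin setT (al i) (al j).
Proof. by move=> ia i j ij; apply: (path_sub j) => // m _; apply: ia. Qed.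

Lemma brk_prev' s a : s <> [::] -> brk (rcons s a) !=set0 -> brk s !=set0.
Proof.
move=> ns; rewrite brk_rcons //.
by move=> [z [[m [y [[x bx _] _]]] _]]; exists x.
Qed.

Lemma brk_prefix x y : x <> [::] -> brk (x ++ y) !=set0 -> brk x !=set0.
Proof.
move=> nx; elim/last_ind: y => [|y c IH]; first by rewrite cats0.
rewrite -rcons_cat => ne; apply: IH; apply: (brk_prev' _ c) => //.
exact: cat_nnil.
Qed.

Lemma sig_take w hh i : (i + hh).+1 = size w -> peq w (drop i w) ->
  (forall j, (i < j < size w)%N -> ~ peq w (drop j w)) ->
  forall j, (j <= hh)%N -> sigh (take j.+1 (drop i w)) j.
Proof.
move=> si pi mi j jh.
set v := drop i w.
have sv : size v = hh.+1 by rewrite size_drop; lia.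
have sx : size (take j.+1 v) = j.+1 by rewrite size_takel // sv.
have nx : take j.+1 v <> [::] by move=> e; rewrite e in sx.
exists 0%N; split; first by rewrite sx.
  by rewrite drop0; apply: peq_refl.
move=> l /andP[l0 lx] [u1 [u2 [a [s [e1 e2 b1 b2]]]]].
rewrite sx in lx.
set rest := drop j.+1 v.
have ev : v = take j.+1 v ++ rest by rewrite cat_take_drop.
have pv : peq v (drop l v).
  exists u1, u2, a, (s ++ rest); split => //.
    by rewrite {1}ev e1 -catA.
  by rewrite {1}ev drop_cat sx lx e2 -catA.
apply: (mi (i + l)%N); first by apply/andP; split; lia.
rewrite addnC -drop_drop.
exact: (peq_trans _ _ _ pi pv).
Qed.

Lemma part3 al : infp al ->
  (exists C, comp C /\ exists N, forall p, (N <= p)%N -> C (al p)) \/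
  (exists be N M, Ip be /\ forall p, al (N + p)%N = be (M + p)%N).
Proof.
move=> ia.
have vert : forall p, isv (al p) by move=> p; have [] := ia p.
case: (pselect (exists N, forall p, (N <= p)%N -> (0 < HH (al p))%N)) => [[N hN]|nN].
  right.
  have [w [nw bw ew]] := vert N.
  have [hh sw] := sig_exists w nw.
  have [i [si pi mi]] := sw.
  set v := drop i w.
  have sv : size v = hh.+1 by rewrite size_drop; lia.
  have [x0 v0] : exists x0, v = x0 :: behead v by case: (v) sv => // x0 s _; exists x0.
  have eN : cls (take hh.+1 v) = al N.
    by rewrite take_oversize ?sv // ew; apply/esym/cls_eq.
  have bv : brk v !=set0 by rewrite -(peq_brk _ _ pi).
  have vt : forall m, (0 < m)%N -> (m <= hh.+1)%N -> isv (cls (take m v)).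
    move=> m m0 mh; exists (take m v); split => //.
      by case: (m) m0 => // m' _; rewrite v0.
    apply: (brk_prefix _ (drop m v)); first by case: (m) m0 => // m' _; rewrite v0.
    by rewrite cat_take_drop.
  pose be := fun j => if (j <= hh)%N then cls (take j.+1 v) else al (N + (j - hh))%N.
  exists be, N, hh; split; last first.
    move=> p; rewrite /be; case: (leqP (hh + p) hh) => hp.
      have -> : p = 0%N by lia.
      by rewrite !addn0 eN.
    by rewrite addKn.
  split.
  - move=> j; rewrite /be; case: (ltngtP j hh) => jh.
    + rewrite ?(ltnW jh) ?jh; split; [apply: vt; lia|apply: vt; lia|].
      exists (take j.+1 v), (nth x0 v j.+1); split => //.
      by rewrite (take_nth x0) // sv.
    + rewrite ?leqNgt ?jh /= ?ltnNge ?(ltnW jh) /=.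
      by have := ia (N + (j - hh))%N; rewrite -addnS -subSn // ltnW.
    + rewrite ?jh ?leqnn ?ltnn /= eN subSn // subnn addn1.
      exact: ia.
  - by rewrite /be leq0n v0 /= take0 H1.
  - move=> j j0; rewrite /be; case: (leqP j hh) => jh.
      by rewrite (Hval _ _ (sig_take w hh i si pi mi j jh)).
    by apply: hN; apply: leq_addr.
left.
have inf0 : forall N, exists p, (N <= p)%N /\ HH (al p) = 0%N.
  move=> N; apply: contrapT => ne; apply: nN; exists N => p Np.
  rewrite lt0n; apply/negP => /eqP e; by apply: ne; exists p; split.
have pig : exists a, forall N, exists p, (N <= p)%N /\ al p = cls [:: a].
  apply: contrapT => npig.
  have ch : forall a : 'I_k, exists Na : nat, forall p, (Na <= p)%N -> al p <> cls [:: a].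
    move=> a; apply: contrapT => nex; apply: npig; exists a => N0.
    apply: contrapT => nN'; apply: nex; exists N0 => q Nq eq1; by apply: nN'; exists q; split.
  have [Nf hNf] := choice ch.
  have [p [Np Hp]] := inf0 (\max_(a : 'I_k) Nf a).
  have [a ea] := H0_basis _ (vert p) Hp.
  by apply: (hNf a p) => //; exact: leq_trans (leq_bigmax a) Np.
have [a ha] := pig.
have [p1 [_ e1]] := ha 0%N.
have [p2 [l2 e2]] := ha p1.+1.
have vv : pin setT (cls [:: a]) (cls [:: a]).
  by rewrite -{1}e1 -e2; apply: (path_al al ia).
exists [set x | pin setT (cls [:: a]) x /\ pin setT x (cls [:: a])]; split.
  exact: comp_of.
exists p1 => p pp.
case: (eqVneq p p1) => [->|ne]; first by rewrite e1; split.
have [p3 [l3 e3]] := ha p.+1.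
split.
  by rewrite -e1; apply: (path_al al ia); rewrite ltn_neqAle eq_sym ne pp.
by rewrite -e3; apply: (path_al al ia).
Qed.

End Main.

Theorem mainTheorem6 (T : topologicalType) (h : RR -> T) (tau tau' : T -> T)
  (F : T -> T) (n : nat) (gam : 'I_n -> RR -> T) (k : nat)
  (br : 'I_k -> 'I_n) (lo hi : 'I_k -> RR) (ell : 'I_k -> 'I_n) (per : 'I_k -> int) :
  lifted_graph h tau tau' ->
  continuous F ->
  degree_one tau F ->
  sun_like h F gam ->
  basic_partition h tau tau' F gam br lo hi ell per ->
  (* (i) *)
  ((forall C, component h tau tau' F gam br lo hi C ->
      exists al, C al /\ H h tau tau' F gam br lo hi al = 0%N) /\
   (exists s : seq (set (set (seq 'I_k))), (size s <= k)%N /\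
      forall C, component h tau tau' F gam br lo hi C -> List.In C s)) /\
  (* (ii) *)
  ((forall be, Ipath h tau tau' F gam br lo hi be ->
      forall p, H h tau tau' F gam br lo hi (be p) = p) /\
   (exists s : seq (nat -> set (seq 'I_k)), (size s <= k)%N /\
      forall be, Ipath h tau tau' F gam br lo hi be -> List.In be s)) /\
  (* (iii) *)
  (forall al, infinite_path h tau tau' F gam br lo hi al ->
     (exists C, component h tau tau' F gam br lo hi C /\
        exists N, forall p, (N <= p)%N -> C (al p)) \/
     (exists be N M, Ipath h tau tau' F gam br lo hi be /\
        forall p, al (N + p)%N = be (M + p)%N)).
Proof.
move=> [[_ [_ hinj0 _]] [tK tK' ct ct'] htau comps _] Fc D1 SL BP.
have hinj : forall x y, h x = h y -> x = y by move=> x y; apply: hinj0.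
have hcomp : forall x, ~ range h x ->
    exists t0, closure (cc h x) `&` range h = [set h t0] by move=> x /comps [].
split; first by eapply part1; eassumption.
split; last by move=> al ia; eapply part3; eassumption.
split; first by move=> be ib; eapply Ip_H; eassumption.
by eapply part2; eassumption.
Qed.
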